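(* Let $X$ be a topological space and let $g,f:X\to\mathbb{R}$ be functions with $g\le f$ (i.e. $g(x)\le f(x)$ for all $x\in X$). Suppose there exist a strong binary relation $\rho$ on the power set $\mathcal{P}(X)$, and, for each rational number $t$, lower indefinite cut sets $A(f,t)$ and $A(g,t)$ in the domain of $f$ and $g$ respectively at the level $t$, such that whenever $t_1<t_2$ are rationals we have $A(f,t_1)\,\rho\,A(g,t_2)$. (a) If every $\Lambda$-set in $X$ is open, then there exists a contra-continuous function $h:X\to\mathbb{R}$ with $g\le h\le f$. (b) If every $\Lambda$-set in $X$ is a $G_\delta$-set, then there exists a Baire-one function $h:X\to\mathbb{R}$ with $g\le h\le f$.
   Context: A $\Lambda$-set in a topological space $X$ is a set that is an intersection of open sets. For $A\subseteq X$, define $A^{\Lambda}=\bigcap\{O: O\supseteq A,\ O \text{ open}\}$ and $A^{V}=\bigcup\{F: F\subseteq A,\ F \text{ closed}\}$. For a binary relation $\rho$ on a set $S$, define $\bar\rho$ by: $x\,\bar\rho\,y$ iff for all $u,v\in S$, ($y\,\rho\,v$ implies $x\,\rho\,v$) and ($u\,\rho\,x$ implies $u\,\rho\,y$). A binary relation $\rho$ on $\mathcal{P}(X)$ is a strong binary relation if: (1) whenever $A_i\,\rho\,B_j$ for all $i\in\{1,\dots,m\}$ and $j\in\{1,\dots,n\}$, there is $C\in\mathcal{P}(X)$ with $A_i\,\rho\,C$ and $C\,\rho\,B_j$ for all such $i,j$; (2) $A\subseteq B$ implies $A\,\bar\rho\,B$; (3) $A\,\rho\,B$ implies $A^{\Lambda}\subseteq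 B$ and $A\subseteq B^{V}$. For $f:X\to\mathbb{R}$ and $l\in\mathbb{R}$, a set $A(f,l)$ with $\{x: f(x)<l\}\subseteq A(f,l)\subseteq\{x: f(x)\le l\}$ is a lower indefinite cut set in the domain of $f$ at level $l$. A function $h:X\to\mathbb{R}$ is contra-continuous (resp. Baire-one) if the preimage of every open subset of $\mathbb{R}$ is closed (resp. an $F_\sigma$-set) in $X$. *)

(* Defs.v *)
From HB Require Import structures.
From mathcomp Require Import all_boot all_order all_algebra.
From mathcomp Require Import all_classical all_reals all_analysis.
From mathcomp Require Import borel_hierarchy.
Set Implicit Arguments. Unset Strict Implicit. Unset Printing Implicit Defensive.
Import Order.TTheory GRing.Theory Num.Theory.
Import numFieldNormedType.Exports.
Local Open Scope classical_set_scope.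
Local Open Scope ring_scope.

Section Defs.
Context {X : topologicalType}.

Definition Lambda_set (A : set X) : Prop :=
  exists F : set (set X), (forall O, F O -> open O) /\ A = \bigcap_(O in F) O.

Definition Lambda_hull (A : set X) : set X :=
  \bigcap_(O in [set O : set X | open O /\ A `<=` O]) O.

Definition V_kernel (A : set X) : set X :=
  \bigcup_(F in [set F : set X | closed F /\ F `<=` A]) F.

Definition rel_bar (S : Type) (rho : S -> S -> Prop) (x y : S) : Prop :=
  forall u v : S, (rho y v -> rho x v) /\ (rho u x -> rho u y).

Definition strong_binary_relation (rho : set X -> set X -> Prop) : Prop :=
  (forall (m n : nat) (A : 'I_m.+1 -> set X) (B : 'I_n.+1 -> set X),
      (forall i j, rho (A i) (B j)) ->
      exists C : set X, (forall i, rho (A i) C) /\ (forall j, rho C (B j)))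
  /\ (forall A B : set X, A `<=` B -> rel_bar rho A B)
  /\ (forall A B : set X, rho A B -> Lambda_hull A `<=` B /\ A `<=` V_kernel B).

Definition lower_indefinite_cut {R : realType} (f : X -> R) (l : R) (A : set X)
  : Prop :=
  [set x | f x < l] `<=` A /\ A `<=` [set x | f x <= l].

Definition contra_continuous {R : realType} (h : X -> R) : Prop :=
  forall U : set R, open U -> closed (h @^-1` U).

Definition baire_one {R : realType} (h : X -> R) : Prop :=
  forall U : set R, open U -> Fsigma (h @^-1` U).

End Defs.

(* Main.v *)
Require Import Defs.
From HB Require Import structures.
From mathcomp Require Import all_boot all_order all_algebra.
From mathcomp Require Import all_classical all_reals all_analysis.
From mathcomp Require Import borel_hierarchy.
Import Order.TTheory GRing.Theory Num.Theory.
Import numFieldNormedType.Exports.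
Local Open Scope classical_set_scope.
Local Open Scope ring_scope.

Section Aux.
Context {X : topologicalType}.
Variable rho : set X -> set X -> Prop.
Hypothesis hrho : strong_binary_relation rho.

Definition nb (x y : X) := Lambda_hull [set y] x \/ Lambda_hull [set x] y.

Lemma LH_self (A : set X) : A `<=` Lambda_hull A.
Proof. by move=> x Ax O [_ AO]; exact: AO. Qed.

Lemma nb_sym x y : nb x y -> nb y x.
Proof. by case=> ?; [right|left]. Qed.

Lemma nb_refl x : nb x x.
Proof. by left; apply: LH_self. Qed.

Definition Nb (A : set X) := [set y | exists2 x, A x & nb x y].

Fixpoint zig n (A : set X) := if n is m.+1 then zig m (Nb A) else A.

Definition comp (A : set X) := [set y | exists n, zig n A y].

Lemma Nb_mono (A B : set X) : A `<=` B -> Nb A `<=` Nb B.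
Proof. by move=> AB y [x Ax xy]; exists x => //; apply: AB. Qed.

Lemma zig_mono {n} : forall {A B : set X}, A `<=` B -> zig n A `<=` zig n B.
Proof.
elim: n => [|n IH] A B AB //=.
by apply: IH; apply: Nb_mono.
Qed.

Lemma rho_sub {A B : set X} : rho A B -> Nb A `<=` B.
Proof.
move: hrho => [_ [_ h3]] /h3 [hL hV] y [x Ax [xy|yx]].
- have [F [cF FB] Fx] := hV x Ax.
  apply: FB; have [//|nFy] := pselect (F y).
  exfalso.
  have : (~` F) x.
    apply: xy; split; first by rewrite openC.
    by move=> z ->.
  by [].
- apply: hL => O [oO AO]; apply: yx; split => //.
  by move=> z ->; apply: AO.
Qed.

Lemma zig_rho {n} : forall {A B : set X}, rho A B -> zig n A `<=` B.
Proof.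
elim: n => [|n IH] A B hAB /=.
  by move=> x Ax; apply: (rho_sub hAB); exists x => //; apply: nb_refl.
have [C [hAC hCB]] := hrho.1 0%N 0%N (fun _ => A) (fun _ => B) (fun _ _ => hAB).
move=> y /(zig_mono (rho_sub (hAC ord0))) /(IH _ _ (hCB ord0)).
done.
Qed.

Lemma zig_nb n : forall (A : set X) x y, zig n A x -> nb x y -> zig n.+1 A y.
Proof.
elim: n => [|n IH] A x y /= hx hxy; first by exists x.
exact: (IH _ _ _ hx hxy).
Qed.

Lemma comp_nb (A : set X) x y : comp A x -> nb x y -> comp A y.
Proof. by move=> [n hn] hxy; exists n.+1; apply: zig_nb hn hxy. Qed.

End Aux.

Lemma closure1_nb {X : topologicalType} (z y : X) :
  closure [set z] y -> nb z y.
Proof.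
move=> cl; left => O [oO yO].
have [w [wz wO]] := cl O (open_nbhs_nbhs (conj oO (yO y erefl))).
by rewrite -wz.
Qed.

Lemma LambdaC {X : topologicalType} {P : set X} :
  (forall z y, P z -> nb z y -> P y) -> Lambda_set (~` P).
Proof.
move=> H; exists [set ~` closure [set z] | z in P]; split.
  by move=> O [z Pz <-]; rewrite openC; apply: closed_closure.
apply/seteqP; split.
  move=> w nPw O [z Pz <-] clw; apply: nPw.
  by apply: (H z w Pz); apply: closure1_nb.
move=> w hw Pw.
have := hw (~` closure [set w]); apply => //; last by apply: subset_closure.
by exists w.
Qed.

Theorem theorem1 (R : realType) (X : topologicalType) (g f : X -> R)
  (hgf : forall x, g x <= f x)
  (hyp : exists rho : set X -> set X -> Prop,
     strong_binary_relation rho /\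
     exists Af Ag : rat -> set X,
       (forall t : rat, lower_indefinite_cut f (ratr t) (Af t)) /\
       (forall t : rat, lower_indefinite_cut g (ratr t) (Ag t)) /\
       (forall t1 t2 : rat, t1 < t2 -> rho (Af t1) (Ag t2))) :
  ((forall A : set X, Lambda_set A -> open A) ->
     exists h : X -> R, contra_continuous h /\ forall x, g x <= h x <= f x)
  /\
  ((forall A : set X, Lambda_set A -> Gdelta A) ->
     exists h : X -> R, baire_one h /\ forall x, g x <= h x <= f x).
Proof.
move: hyp => [rho [hrho [Af [Ag [hAf [hAg hfg]]]]]].
pose S := fun x => [set (ratr t : R) | t in [set t | comp (Af t) x]].
pose h := fun x => inf (S x).
have hne x : S x !=set0.
  have fx1 : f x < f x + 1 by rewrite ltrDl.
  have [t] := rat_in_itvoo fx1.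
  rewrite in_itv /= => /andP[ft _].
  exists (ratr t), t => //; exists 0%N => /=.
  by apply: (hAf t).1.
have hlb x : lbound (S x) (g x).
  move=> _ [t [n hn] <-]; rewrite leNgt; apply/negP => lt.
  have [u] := rat_in_itvoo lt; rewrite in_itv /= => /andP[tu ug].
  have tu' : t < u by rewrite -(ltr_rat R).
  have := (hAg u).2 _ (zig_rho _ hrho (hfg t u tu') _ hn).
  by rewrite /= leNgt ug.
have hgh x : g x <= h x by apply: lb_le_inf (hne x) (hlb x).
have hhf x : h x <= f x.
  rewrite leNgt; apply/negP => lt.
  have [t] := rat_in_itvoo lt; rewrite in_itv /= => /andP[ft th].
  have : h x <= ratr t.
    apply: (ge_inf (ex_intro _ (g x) (hlb x))).
    by exists t => //; exists 0%N; apply: (hAf t).1.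
  by rewrite leNgt th.
have hinv x y : nb x y -> h x = h y.
  move=> xy; rewrite /h; congr inf; apply/seteqP; split => _ [t ht <-];
    exists t => //; apply: comp_nb ht _ => //; exact: nb_sym.
have hP (U : set R) : forall z y, (h @^-1` U) z -> nb z y -> (h @^-1` U) y.
  by move=> z y Uz zy; rewrite /preimage /= -(hinv _ _ zy).
have hb x : g x <= h x <= f x by rewrite hgh hhf.
split => hX; exists h; split => //.
  move=> U _; have := hX _ (LambdaC (hP U)).
  by rewrite -closedC setCK.
move=> U _; have [G oG eG] := hX _ (LambdaC (hP U)).
exists (fun i => ~` G i); first by move=> i; rewrite closedC.
by rewrite -setC_bigcap -eG setCK.
Qed.
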